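(* If $G$ is an $n$-vertex graph with minimum degree at least $n/2$, then $rc(G)\le 3$.
   Context: All graphs are finite, simple and undirected. An edge-colored graph is rainbow connected if every two vertices are connected by a path whose edges have pairwise distinct colors. The rainbow connection $rc(G)$ of a connected graph $G$ is the smallest number of colors in an edge coloring making $G$ rainbow connected. *)

(* Defs.v *)
From mathcomp Require Import all_boot.
Set Implicit Arguments. Unset Strict Implicit. Unset Printing Implicit Defensive.

Definition simple_graph (T : finType) (e : rel T) : Prop :=
  symmetric e /\ irreflexive e.

Definition deg (T : finType) (e : rel T) (x : T) : nat := #|[set y | e x y]|.

(* An edge colouring with colours in C: a symmetric function on pairs
   (only its values on edges matter). *)
Definition edge_coloring (T : finType) (C : Type) (c : T -> T -> C) : Prop :=
  forall x y, c x y = c y x.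

Definition path_colors (T : finType) (C : Type) (c : T -> T -> C) (x : T) (p : seq T) : seq C :=
  pairmap c x p.

Definition rainbow_path (T : finType) (C : eqType) (e : rel T) (c : T -> T -> C)
  (x y : T) (p : seq T) : bool :=
  [&& path e x p, last x p == y, uniq (x :: p) & uniq (path_colors c x p)].

Definition rainbow_connected (T : finType) (C : eqType) (e : rel T) (c : T -> T -> C) : Prop :=
  forall x y : T, exists p : seq T, rainbow_path e c x y p.

Definition rc_le (T : finType) (e : rel T) (k : nat) : Prop :=
  exists c : T -> T -> 'I_k, edge_coloring c /\ rainbow_connected e c.

(* Main.v *)
Require Import Defs.
From mathcomp Require Import all_boot.
From mathcomp Require Import zify.
Set Implicit Arguments. Unset Strict Implicit. Unset Printing Implicit Defensive.

Definition valid (T : finType) (e : rel T) (m : T -> T) :=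
  forall z, m (m z) = z /\ (m z != z -> e z (m z)).

Definition msize (T : finType) (m : T -> T) := #|[set z | m z != z]|.

Definition swap2 (T : eqType) (m : T -> T) (p q : T) (z : T) :=
  if z == p then q else if z == q then p else m z.

Definition unm (T : eqType) (m : T -> T) (p : T) (z : T) :=
  if (z == p) || (z == m p) then z else m z.

Lemma valid_inj (T : finType) (e : rel T) m : valid e m -> injective m.
Proof. by move=> V a b H; rewrite -(proj1 (V a)) H (proj1 (V b)). Qed.

Lemma unm_valid (T : finType) (e : rel T) m p : valid e m -> valid e (unm m p).
Proof.
move=> V z; rewrite /unm.
case H: ((z == p) || (z == m p)); first by rewrite H; split => //; rewrite eqxx.
move/norP: H=> [Hzp Hzm].
have ->: (m z == p) || (m z == m p) = false.
  apply/norP; split.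
  - by apply: contra Hzm => /eqP <-; rewrite (proj1 (V z)).
  - by apply: contra Hzp => /eqP /(valid_inj V) ->.
by apply: V.
Qed.

Lemma swap_valid (T : finType) (e : rel T) m p q :
  symmetric e -> valid e m -> p != q -> e p q -> m p = p -> m q = q ->
  valid e (swap2 m p q).
Proof.
move=> Se V pq epq mp mq z; rewrite /swap2.
case: (eqVneq z p) => [->|zp].
  have qp : q != p by rewrite eq_sym.
  by rewrite (negbTE qp) !eqxx; split.
case: (eqVneq z q) => [->|zq].
  by rewrite eqxx; split => // _; rewrite Se.
have mzp : m z != p by apply: contra zp => /eqP H; rewrite -(proj1 (V z)) H mp.
have mzq : m z != q by apply: contra zq => /eqP H; rewrite -(proj1 (V z)) H mq.
by rewrite (negbTE mzp) (negbTE mzq); apply: V.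
Qed.

Lemma msize_lt (T : finType) (m g : T -> T) u :
  (forall z, m z != z -> g z != z) -> m u = u -> g u != u -> msize m < msize g.
Proof.
move=> H mu gu; apply: proper_card; apply/properP; split.
  by apply/subsetP => z; rewrite !inE; apply: H.
by exists u; rewrite !inE ?mu ?eqxx.
Qed.

Lemma key (T : finType) (e : rel T) (m : T -> T) x y :
  symmetric e -> irreflexive e -> valid e m -> ~~ e x y ->
  (forall a, (a == x) || e x a -> m a != a -> ~~ e (m a) y) ->
  (forall a, (a == y) || e y a -> m a != a -> ~~ e (m a) x) ->
  (m y = y -> forall b, e y b -> m b != b) ->
  (m y != y -> forall b b', e y b -> e y b' -> m b = b -> m b' = b' -> b = b') ->
  #|[set z | e x z]| + #|[set z | e y z]| < #|T|.
Proof.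
move=> Se Ie V nxy NA NB H1 H2.
set X := [set z | e x z]; set Y := [set z | e y z].
set Ym := [set z | e y z & m z != z]; set I := m @: Ym.
have dis : X :&: I = set0.
  apply/setP => z; rewrite inE [z \in set0]inE.
  apply/negbTE/andP => [[Hx /imsetP[b Hb Ez]]]; subst z.
  move: Hb; rewrite inE => /andP[eyb mb].
  have := NA (m b); rewrite inE in Hx; rewrite Hx orbT (proj1 (V b)).
  by rewrite eq_sym mb Se eyb => /(_ isT isT).
have cXI: #|X :|: I| = #|X| + #|I| by rewrite -cardsUI dis cards0 addn0.
have cI: #|I| = #|Ym| by apply: card_imset; apply: valid_inj V.
have xZ: x \notin X :|: I.
  rewrite inE negb_or inE Ie /=; apply/imsetP => [[b Hb Ex]].
  move: Hb; rewrite inE => /andP[eyb mb].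
  have := NA x; rewrite eqxx /= Ex (proj1 (V b)).
  by rewrite eq_sym mb Se eyb => /(_ isT isT).
case: (eqVneq (m y) y) => my.
  have YYm : Y = Ym.
    by apply/setP => z; rewrite !inE; case eyz: (e y z) => //=; rewrite H1.
  have := max_card (mem (x |: (X :|: I))).
  rewrite cardsU1 xZ cXI cI -YYm.
  move=> h. apply: leq_trans h. by rewrite add1n ltnS addnC.
set w := m y.
have wx : w != x.
  by apply/eqP => wx; move: (proj2 (V y) my) nxy; rewrite -/w wx Se => ->.
have wZ : w \notin X :|: I.
  rewrite inE negb_or; apply/andP; split.
    rewrite inE; have := NB y; rewrite eqxx /= => /(_ isT my).
    by rewrite Se.
  apply/imsetP => [[b Hb Ew]].
  have byy : b = y by apply: (valid_inj V); rewrite -Ew.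
  by move: Hb; rewrite inE byy Ie.
have cY : #|Y| <= #|Ym| + 1.
  rewrite -(cardsID Ym Y).
  have ->: Y :&: Ym = Ym by apply/setP => z; rewrite !inE; case: (e y z).
  rewrite leq_add2l; apply/card_le1_eqP => b b'.
  rewrite !inE => /andP[nb eb] /andP[nb' eb'].
  move: nb nb'; rewrite eb eb' /= !negbK => /eqP nb /eqP nb'.
  first [by apply: (H2 my) | by symmetry; apply: (H2 my)].
have := max_card (mem (x |: (w |: (X :|: I)))).
have xw : x \notin w |: (X :|: I) by rewrite in_setU1 negb_or eq_sym wx xZ.
rewrite cardsU1 cardsU1 wZ xw cXI cI.
move=> h; apply: leq_trans h. lia.
Qed.

Lemma aug1 (T : finType) (e : rel T) (m : T -> T) u w :
  symmetric e -> valid e m -> m u = u -> m w = w -> u != w -> e u w ->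
  valid e (swap2 m u w) /\ msize m < msize (swap2 m u w).
Proof.
move=> Se V mu mw uw euw; split; first exact: swap_valid.
apply: (msize_lt (u := u)) => //.
  move=> z mz; rewrite /swap2.
  case: (eqVneq z u) => [zu|zu]; first by rewrite zu mu eqxx in mz.
  case: (eqVneq z w) => [zw|zw]; first by rewrite zw mw eqxx in mz.
  exact: mz.
by rewrite /swap2 eqxx eq_sym.
Qed.

Lemma aug2 (T : finType) (e : rel T) (m : T -> T) u w a :
  symmetric e -> irreflexive e -> valid e m -> m u = u -> m w = w -> u != w ->
  e u a -> m a != a -> e (m a) w ->
  exists g, valid e g /\ msize m < msize g.
Proof.
move=> Se Ie V mu mw uw eua ma eqw.
have ua : u != a by apply/eqP => ua; move: eua; rewrite ua Ie.
have qw : (m a) != w by apply/eqP => qw; move: eqw; rewrite qw Ie.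
have aq : a != (m a) by rewrite eq_sym.
have mq : m (m a) = a by rewrite (proj1 (V a)).
have uq : u != (m a).
  apply/eqP => uq; have := mq; rewrite -uq mu => au.
  by move: aq; rewrite -uq au eqxx.
have wa : w != a by apply/eqP => wa; move: ma; rewrite -wa mw eqxx.
have eaq : e a (m a) by apply: (proj2 (V a)).
set m1 := unm m a.
have V1 : valid e m1 by apply: unm_valid.
have m1u : m1 u = u by rewrite /m1 /unm (negbTE ua) (negbTE uq) /= mu.
have m1a : m1 a = a by rewrite /m1 /unm eqxx.
set m2 := swap2 m1 u a.
have V2 : valid e m2 by apply: swap_valid.
have qa : (m a) != a by rewrite eq_sym.
have m2q : m2 (m a) = (m a).
  by rewrite /m2 /swap2 eq_sym (negbTE uq) (negbTE qa) /m1 /unm eqxx orbT.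
have wq : w != (m a) by rewrite eq_sym.
have m2w : m2 w = w.
  rewrite /m2 /swap2 eq_sym (negbTE uw) (negbTE wa) /m1 /unm.
  by rewrite (negbTE wa) (negbTE wq) /= mw.
exists (swap2 m2 (m a) w); split; first exact: swap_valid.
apply: (msize_lt (u := u)) => //.
  move=> z mz; rewrite /swap2.
  case: (eqVneq z (m a)) => [->|zq]; first by rewrite eq_sym.
  case: (eqVneq z w) => [zw|zw]; first by rewrite zw mw eqxx in mz.
  rewrite /m2 /swap2.
  case: (eqVneq z u) => [zu|zu]; first by rewrite zu mu eqxx in mz.
  case: (eqVneq z a) => [->|za]; first exact: ua.
  by rewrite /m1 /unm (negbTE za) (negbTE zq).
rewrite /swap2 (negbTE uq) (negbTE uw) /m2 /swap2 eqxx.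
by rewrite eq_sym.
Qed.

Definition validb (T : finType) (e : rel T) (f : {ffun T -> T}) :=
  [forall z, (f (f z) == z) && ((f z != z) ==> e z (f z))].

Lemma validbP (T : finType) (e : rel T) (f : {ffun T -> T}) :
  validb e f -> valid e f.
Proof.
move=> /forallP H z; have /andP[/eqP -> /implyP h] := H z; by split.
Qed.

Lemma validPb (T : finType) (e : rel T) (g : T -> T) :
  valid e g -> validb e [ffun z => g z].
Proof.
move=> V; apply/forallP => z; rewrite !ffunE (proj1 (V z)) eqxx /=.
by apply/implyP => /(proj2 (V z)).
Qed.

Lemma maxmatch (T : finType) (e : rel T) :
  symmetric e -> irreflexive e -> (forall x, #|T| <= 2 * deg e x) ->
  exists m : T -> T, valid e m /\ (forall u w, m u = u -> m w = w -> u = w).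
Proof.
move=> Se Ie Hd.
have P0 : validb e [ffun z : T => z].
  by apply/forallP => z; rewrite !ffunE eqxx.
case: (arg_maxnP (fun f : {ffun T -> T} => msize f) P0) => m Pm Hm.
have V := validbP Pm.
have Hmax : forall g : T -> T, valid e g -> msize g <= msize m.
  move=> g Vg; have := Hm _ (validPb Vg).
  suff -> : msize [ffun z => g z] = msize g by [].
  by rewrite /msize; apply: eq_card => z; rewrite !inE ffunE.
exists m; split => // u w mu mw.
apply/eqP/negPn/negP => uw.
have A1 : forall a b, m a = a -> m b = b -> a != b -> ~~ e a b.
  move=> a b ma mb ab; apply/negP => eab.
  have [Vg lt] := aug1 Se V ma mb ab eab.
  by have := Hmax _ Vg; rewrite leqNgt lt.
have A2 : forall a b c, m a = a -> m b = b -> a != b -> e a c -> m c != c ->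
    ~~ e (m c) b.
  move=> a b c ma mb ab eac mc; apply/negP => ecb.
  have [g [Vg lt]] := aug2 Se Ie V ma mb ab eac mc ecb.
  by have := Hmax _ Vg; rewrite leqNgt lt.
have nuw : ~~ e u w by apply: A1.
have wu : w != u by rewrite eq_sym.
have K : #|[set z | e u z]| + #|[set z | e w z]| < #|T|.
  apply: (key Se Ie V nuw).
  - move=> a /orP[/eqP ->|eua] ma; first by rewrite mu eqxx in ma.
    exact: A2 mu mw uw eua ma.
  - move=> a /orP[/eqP ->|ewa] ma; first by rewrite mw eqxx in ma.
    exact: A2 mw mu wu ewa ma.
  - move=> _ b ewb; apply/eqP => mb.
    have wb : w != b by apply/eqP => wb; move: ewb; rewrite wb Ie.
    by move: (A1 w b mw mb wb); rewrite ewb.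
  - by rewrite mw eqxx.
have := Hd u; have := Hd w; rewrite /deg; lia.
Qed.

Theorem corollary1p5 (T : finType) (e : rel T) :
  simple_graph e ->
  (forall x : T, #|T| <= 2 * deg e x) ->
  rc_le e 3.
Proof.
move=> [Se Ie] Hd.
have [m [V U]] := maxmatch Se Ie Hd.
pose r := fun x : T => nat_of_ord (enum_rank x).
pose inA := fun x => r x <= r (m x).
pose col := fun x y => if m x == y then 2 else if inA x == inA y then 0 else 1.
have colb : forall a b, col a b < 3.
  by move=> a b; rewrite /col; case: (m a == b); case: (inA a == inA b).
have cneq : forall a b c d, col a b != col c d ->
    inord (col a b) != inord (col c d) :> 'I_3.
  move=> a b c d; apply: contra => /eqP/(congr1 val).
  by rewrite /= !inordK ?colb // => ->.
have opp : forall a, m a != a -> inA a != inA (m a).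
  move=> a ma; rewrite /inA (proj1 (V a)).
  have : r a != r (m a).
    apply: contra ma => /eqP H; apply/eqP; symmetry; apply: enum_rank_inj; exact: val_inj H.
  lia.
have mm : forall a, m (m a) = a by move=> a; apply: (proj1 (V a)).
have em : forall a, m a != a -> e a (m a) by move=> a; apply: (proj2 (V a)).
exists (fun x y => inord (col x y) : 'I_3); split.
  move=> x y /=; congr inord; rewrite /col.
  have -> : (m x == y) = (m y == x).
    by apply/eqP/eqP => <-; rewrite mm.
  by rewrite (eq_sym (inA x)).
move=> x y.
case: (eqVneq x y) => [<-|xy].
  by exists [::]; rewrite /rainbow_path /= eqxx.
case exy: (e x y).
  by exists [:: y]; rewrite /rainbow_path /= exy eqxx inE xy.
have nxy : ~~ e x y by rewrite exy.
have nyx : ~~ e y x by rewrite Se.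
case: (boolP (inA x == inA y)) => sxy; last first.
  have : [set z | e x z] :&: [set z | e y z] != set0.
    apply/negP => /eqP H0.
    have := cardsUI [set z | e x z] [set z | e y z]; rewrite H0 cards0 addn0.
    have : #|[set z | e x z] :|: [set z | e y z]| <= #|[set~ x]|.
      apply: subset_leq_card; apply/subsetP => z; rewrite !inE.
      case/orP => h; apply/eqP => zx; move: h; rewrite zx ?Ie //.
      by rewrite Se (negbTE nxy).
    rewrite cardsC1 => h1 h2.
    have := Hd x; have := Hd y; rewrite /deg.
    have : 0 < #|T| by apply/card_gt0P; exists x.
    lia.
  case/set0Pn => z; rewrite !inE => /andP[exz eyz].
  exists [:: z; y]; rewrite /rainbow_path /= exz Se eyz eqxx /=.
  rewrite !inE !negb_or xy andbT /=.
  have zx : z != x by apply/eqP => zx; move: exz; rewrite zx Ie.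
  have zy : z != y by apply/eqP => zy; move: eyz; rewrite zy Ie.
  rewrite eq_sym zx zy /= andbT; apply: cneq; rewrite /col.
  case: (eqVneq (m x) z) => mxz; case: (eqVneq (m z) y) => mzy //.
  - by move: xy; rewrite -mzy -mxz mm eqxx.
  - by case: (inA z == inA y).
  - by case: (inA x == inA z).
  by move: sxy; case: (inA x); case: (inA y); case: (inA z).
have mxy : m x != y.
  apply/eqP => h; have : m x != x by rewrite h eq_sym.
  by move/em; rewrite h => h'; rewrite h' in nxy.
have myx : m y != x.
  apply/eqP => h; have : m y != y by rewrite h.
  by move/em; rewrite h => h'; rewrite h' in nyx.
case: (boolP [exists a, [&& (a == x) || e x a, m a != a & e (m a) y]]).
  case/existsP => a /and3P[/orP[/eqP ->|exa] ma ema].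
    exists [:: m x; y]; rewrite /rainbow_path /= em // ema eqxx /=.
    rewrite !inE !negb_or xy eq_sym ma /=.
    have may : m x != y by apply/eqP => h; move: ema; rewrite h Ie.
    rewrite may /= andbT; apply: cneq; rewrite /col eqxx mm eq_sym (negbTE xy).
    by case: (inA (m x) == inA y).
  have ax : a != x by apply/eqP => h; move: exa; rewrite h Ie.
  have may : m a != y by apply/eqP => h; move: ema; rewrite h Ie.
  have ay : a != y by apply/eqP => h; move: exa; rewrite h exy.
  have max : m a != x by apply/eqP => h; move: ema; rewrite h exy.
  have mxa : m x != a by apply/eqP => h; move: max; rewrite -h mm eqxx.
  exists [:: a; m a; y]; rewrite /rainbow_path /= exa em // ema eqxx /=.
  rewrite !inE !negb_or eq_sym ax eq_sym max xy /=.
  rewrite eq_sym ma ay may /= andbT.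
  apply/andP; split; first (apply/andP; split).
  - by apply: cneq; rewrite /col (negbTE mxa) eqxx; case: ifP.
  - apply: cneq; rewrite /col (negbTE mxa) mm (negbTE ay).
    move: (opp a ma) sxy; case: (inA x); case: (inA y); case: (inA a);
      by case: (inA (m a)).
  - by apply: cneq; rewrite /col eqxx mm (negbTE ay); case: ifP.
move=> nA.
case: (boolP [exists a, [&& (a == y) || e y a, m a != a & e (m a) x]]).
  case/existsP => a /and3P[/orP[/eqP ->|eya] ma emax].
    exists [:: m y; y]; rewrite /rainbow_path /= Se emax -(mm y) Se em ?mm // eqxx /=.
    rewrite !inE !negb_or xy eq_sym myx /=.
    have myy : m y != y by [].
    rewrite myy /= andbT; apply: cneq; rewrite /col mm eqxx.
    have -> : (m x == m y) = false by apply/negbTE; apply: contra xy => /eqP h;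
       rewrite -(mm x) h mm.
    by case: ifP.
  have ay : a != y by apply/eqP => h; move: eya; rewrite h Ie.
  have max : m a != x by apply/eqP => h; move: emax; rewrite h Ie.
  have ax : a != x by apply/eqP => h; move: eya; rewrite h Se exy.
  have may : m a != y by apply/eqP => h; move: emax; rewrite h Se exy.
  have mxma : m x != m a by apply: contra ax => /eqP h; rewrite -(mm x) h mm.
  have e1 : e x (m a) by rewrite Se.
  have e2 : e (m a) a by rewrite Se em.
  have e3 : e a y by rewrite Se.
  exists [:: m a; a; y]; rewrite /rainbow_path /= e1 e2 e3 eqxx /=.
  rewrite !inE !negb_or (eq_sym x (m a)) max (eq_sym x a) ax xy ma may ay /= !andbT.
  apply/andP; split; first (apply/andP; split).
  - by apply: cneq; rewrite /col (negbTE mxma) mm eqxx; case: ifP.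
  - apply: cneq; rewrite /col (negbTE mxma).
    have -> : (m a == y) = false by apply/negbTE.
    move: (opp a ma) sxy; case: (inA x); case: (inA y); case: (inA a);
      by case: (inA (m a)).
  - by apply: cneq; rewrite /col mm eqxx (negbTE may); case: ifP.
move=> nB; exfalso.
have K : #|[set z | e x z]| + #|[set z | e y z]| < #|T|.
  apply: (key Se Ie V nxy).
  - move=> a Ha ma; apply/negP => ema; move/negP: nA; apply; apply/existsP.
    by exists a; rewrite Ha ma ema.
  - move=> a Ha ma; apply/negP => ema; move/negP: nB; apply; apply/existsP.
    by exists a; rewrite Ha ma ema.
  - move=> my b eyb; apply/eqP => mb; have := U _ _ my mb => yb.
    by move: eyb; rewrite -yb Ie.
  - by move=> _ b b' _ _ mb mb'; apply: U.
by have := Hd x; have := Hd y; rewrite /deg; lia.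
Qed.
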